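(* Let $G^c$ be a vertex-coloured graph with $n$ vertices, $m$ edges and $c$ colours, and let $k>0$ be an integer. If $m\ge \binom{n-k+c-1}{2}+n-k$ and $n>k+c-2$, then $\gamma^t(G^c)\le k$. Furthermore (for $k\ge c$), there exist vertex-coloured graphs with $n$ vertices, $c$ colours, exactly $\binom{n-k+c-1}{2}+n-k$ edges and $\gamma^t=k$.
   Context: A vertex-coloured graph $G^c$ with colour set $\{1,\dots,c\}$ is a finite simple graph in which every vertex receives exactly one colour and every colour appears on at least one vertex. A dominating set is tropical if every colour appears on at least one of its vertices; $\gamma^t(G^c)$ is the minimum size of a tropical dominating set. *)

(* Defs.v *)
From mathcomp Require Import all_boot.
Set Implicit Arguments. Unset Strict Implicit. Unset Printing Implicit Defensive.

Definition simple_graph (n : nat) (e : rel 'I_n) : Prop :=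
  (forall u v, e u v = e v u) /\ (forall v, ~~ e v v).

Definition colouring_onto (n c : nat) (col : 'I_n -> 'I_c) : Prop :=
  forall i : 'I_c, exists v : 'I_n, col v = i.

Definition num_edges (n : nat) (e : rel 'I_n) : nat :=
  #|[set p : 'I_n * 'I_n | (p.1 < p.2)%N && e p.1 p.2]|.

Definition dominating (n : nat) (e : rel 'I_n) (D : {set 'I_n}) : bool :=
  [forall v, (v \in D) || [exists u in D, e u v]].

Definition tropical (n c : nat) (col : 'I_n -> 'I_c) (D : {set 'I_n}) : bool :=
  [forall i : 'I_c, [exists v in D, col v == i]].

Definition tropical_dominating (n c : nat) (e : rel 'I_n) (col : 'I_n -> 'I_c)
  (D : {set 'I_n}) : bool := dominating e D && tropical col D.

(* Tropical domination number: minimum size of a tropical dominating set.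
   (The whole vertex set is one when the colouring is onto, so the
   default value n is never the result of an empty minimum.) *)
Definition gamma_t (n c : nat) (e : rel 'I_n) (col : 'I_n -> 'I_c) : nat :=
  \big[minn/n]_(D : {set 'I_n} | tropical_dominating e col D) #|D|.

(* Main.v *)
Require Import Defs.
From mathcomp Require Import all_boot zify.
Set Implicit Arguments. Unset Strict Implicit. Unset Printing Implicit Defensive.

Section Viz.
Variable V : finType.
Variable e : rel V.
Hypothesis esym : forall u v, e u v = e v u.
Hypothesis eirr : forall v, ~~ e v v.

Definition degS (S : {set V}) v := \sum_(w in S) (e v w : nat).
Definition bd (S X : {set V}) := [set y in S :\: X | [exists x in X, e x y]].

Lemma sum_card (S : {set V}) (P : pred V) :
  \sum_(w in S) (P w : nat) = #|[set w in S | P w]|.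
Proof.
rewrite -sum1_card [RHS](big_mkcond) /= [LHS]big_mkcond /=.
apply: eq_bigr => w _; rewrite !inE; by case: (w \in S); case: (P w).
Qed.

Lemma viz : forall (S : {set V}) (T : nat),
  (forall X : {set V}, X \subset S -> #|bd S X| <= T) ->
  \sum_(v in S) degS S v <= T * (T + 2).
Proof.
move=> S; elim: {S}_.+1 {-2}S (ltnSn #|S|) => [|N IH] S // HN T HT.
case: (set_0Vmem S) => [->|[u0 u0S]]; first by rewrite big_set0.
pose u := [arg max_(u > u0 in S) degS S u].
have [uS umax] : u \in S /\ forall w, w \in S -> degS S w <= degS S u.
  rewrite /u; case: arg_maxnP => // x xS H; split => // w wS; exact: H.
pose A := [set w in S | e u w].
pose B := S :\: (u |: A).
have uA : u \notin A by rewrite inE (negbTE (eirr u)) andbF.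
have degA : degS S u = #|A| by rewrite /degS sum_card.
have AS : A \subset S by apply/subsetP => w; rewrite inE => /andP[].
have CS : u |: A \subset S by rewrite subUset sub1set uS AS.
have BS : B \subset S by apply: subsetDl.
have Bu : forall v, v \in B -> e u v = false.
  move=> v; rewrite !inE; by case: (v == u); case: (v \in S); case: (e u v).
have DT : #|A| <= T.
  apply: leq_trans (HT [set u] _); last by rewrite sub1set.
  apply: subset_leq_card; apply/subsetP => w; rewrite !inE => /andP[wS euw].
  rewrite wS andbT; apply/andP; split.
    by apply/eqP => Hw; move: euw; rewrite Hw (negbTE (eirr u)).
  by apply/existsP; exists u; rewrite inE eqxx.
have bw : forall w, w \in A -> \sum_(v in B) (e w v : nat) + #|A| <= T + 1.
  move=> w wA; rewrite sum_card.
  have wS : w \in S by move: wA; rewrite inE => /andP[].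
  have : #|(A :\ w) :|: [set v in B | e w v]| <= T.
    apply: leq_trans (HT [set u; w] _); last by rewrite subUset !sub1set uS wS.
    apply: subset_leq_card; apply/subsetP => y; rewrite !inE.
    case/orP => [/andP[ynw /andP[yS euy]]|/andP[/andP[/norP[ynu ynA] yS] ewy]].
      rewrite yS (negbTE ynw) orbF andbT; apply/andP; split.
        by apply/eqP => Hw; move: euy; rewrite Hw (negbTE (eirr u)).
      by apply/existsP; exists u; rewrite !inE eqxx.
    rewrite yS (negbTE ynu) /= andbT; apply/andP; split.
      apply/eqP => Hw; move: ynA; rewrite Hw wS /=; move: wA; rewrite inE => /andP[_ ->]; done.
    by apply/existsP; exists w; rewrite !inE eqxx orbT.
  rewrite cardsU.
  have -> : (A :\ w) :&: [set v in B | e w v] = set0.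
    apply/setP => y; rewrite !inE; apply/negbTE.
    apply/negP => /andP[/andP[_ /andP[yS euy]] /andP[/andP[/norP[_ ]]]].
    by rewrite yS euy.
  rewrite cards0 subn0 (cardsD1 w A) wA; lia.
have HB : \sum_(v in B) degS B v <= (T - #|A|) * (T - #|A| + 2).
  apply: IH.
    rewrite -ltnS; apply: leq_trans HN; apply: proper_card; apply/properP; split => //.
    by exists u => //; rewrite !inE eqxx.
  move=> Y YB.
  have : #|A :|: bd B Y| <= T.
    apply: leq_trans (HT (u |: Y) _); last first.
      by rewrite subUset sub1set uS (subset_trans YB BS).
    apply: subset_leq_card; apply/subsetP => y; rewrite !inE.
    case/orP => [/andP[yS euy]|/andP[/andP[yY yB] /existsP[x /andP[xY exy]]]].
      rewrite yS andbT; apply/andP; split.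
        apply/norP; split.
          by apply/eqP => Hw; move: euy; rewrite Hw (negbTE (eirr u)).
        by apply/negP => yY; move: (Bu y (subsetP YB y yY)); rewrite euy.
      by apply/existsP; exists u; rewrite !inE eqxx.
    move: yB => /andP[/norP[ynu ynA] yS].
    rewrite yS (negbTE yY) (negbTE ynu) /=; apply/existsP; exists x; by rewrite !inE xY orbT.
  rewrite cardsU.
  have -> : A :&: bd B Y = set0.
    apply/setP => y; rewrite !inE; apply/negbTE.
    apply/negP => /andP[/andP[yS euy] /andP[/andP[_ yB] _]].
    by move: yB; rewrite yS euy orbT.
  rewrite cards0 subn0; lia.
rewrite (big_setID (u |: A)) /=.
have -> : S :&: (u |: A) = u |: A by apply/setIidPr.
rewrite big_setU1 //=.
have H1 : \sum_(v in A) degS S v <= #|A| * #|A|.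
  rewrite -degA; apply: leq_trans (_ : \sum_(v in A) degS S u <= _).
    apply: leq_sum => v vA; apply: umax; exact: (subsetP AS).
  by rewrite sum_nat_const -degA.
have H2 : \sum_(v in B) degS S v =
   \sum_(w in A) \sum_(v in B) (e w v : nat) + \sum_(v in B) degS B v.
  rewrite /degS.
  have -> : \sum_(v in B) \sum_(w in S) (e v w : nat) =
     \sum_(v in B) (\sum_(w in u |: A) (e v w : nat) + \sum_(w in B) (e v w : nat)).
    apply: eq_bigr => v vB; rewrite (big_setID (u |: A)) /=.
    by have -> : S :&: (u |: A) = u |: A by apply/setIidPr.
  rewrite big_split /=; congr (_ + _).
  rewrite exchange_big /= big_setU1 //= big1 ?add0n; last first.
    by move=> v vB; rewrite esym Bu.
  apply: eq_bigr => w _; apply: eq_bigr => v _; by rewrite esym.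
have H3 : \sum_(w in A) \sum_(v in B) (e w v : nat) <= #|A| * (T + 1 - #|A|).
  rewrite -sum_nat_const; apply: leq_sum => w wA; move: (bw w wA); lia.
rewrite H2.
have : degS S u + \sum_(v in A) degS S v + (\sum_(w in A) \sum_(v in B) (e w v : nat) + \sum_(v in B) degS B v) <= T * (T + 2).
  move: H1 H3 HB DT; rewrite degA.
  move: (\sum_(v in A) degS S v) (\sum_(w in A) \sum_(v in B) (e w v : nat)) (\sum_(v in B) degS B v) #|A| => a b c d.
  nia.
by rewrite addnA.
Qed.
End Viz.

Lemma sumT (T : finType) (F : T -> nat) : \sum_(i in [set: T]) F i = \sum_i F i.
Proof. by apply: eq_bigl => i; rewrite in_setT. Qed.

Lemma handshake n (e : rel 'I_n) : simple_graph e ->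
  \sum_(v in [set: 'I_n]) degS e [set: 'I_n] v = 2 * num_edges e.
Proof.
case=> sym irr.
rewrite /num_edges.
have -> : [set p : 'I_n * 'I_n | (p.1 < p.2) && e p.1 p.2] =
          [set p in [set: 'I_n * 'I_n] | (p.1 < p.2) && e p.1 p.2].
  by apply/setP => p; rewrite !inE.
rewrite -sum_card !sumT /degS.
under eq_bigr do rewrite sumT.
rewrite -(pair_bigA _ (fun i j : 'I_n => ((i < j) && e i j : nat))) /=.
have -> : \sum_(i : 'I_n) \sum_(j : 'I_n) (e i j : nat) =
   \sum_(i : 'I_n) \sum_(j : 'I_n) ((i < j) && e i j : nat) + \sum_(i : 'I_n) \sum_(j : 'I_n) ((j < i) && e i j : nat).
  rewrite -big_split /=; apply: eq_bigr => i _; rewrite -big_split /=.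
  apply: eq_bigr => j _.
  case: (ltngtP i j) => Hij /=; rewrite ?addn0 //.
  have -> : i = j by apply: val_inj.
  by rewrite (negbTE (irr j)).
rewrite [X in _ + X]exchange_big /=.
under [X in _ + X]eq_bigr do under eq_bigr do rewrite sym.
by rewrite addnn -mul2n.
Qed.

Lemma bin2C r : 'C(r, 2) * 2 = r * r.-1.
Proof. by have := bin_ffact r 2; rewrite ffactnS ffactn1. Qed.

Lemma arith1 n k c a b d p : 0 < c -> 0 < k -> k + c < n + 2 -> b <= c - 1 ->
  a <= d + b -> d = n - p -> p <= n -> n - k + c - 1 <= p -> a <= k.
Proof. move=> *; lia. Qed.

Lemma gamma_le n c (e : rel 'I_n) (col : 'I_n -> 'I_c) (D : {set 'I_n}) :
  tropical_dominating e col D -> gamma_t e col <= #|D|.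
Proof.
move=> H; rewrite /gamma_t.
have : D \in index_enum ({set 'I_n} : finType) by rewrite mem_index_enum.
elim: (index_enum _) => [|x s IH] //; rewrite inE big_cons.
case/orP => [/eqP <-|/IH Hs]; first by rewrite H geq_minl.
by case: ifP => _ //; rewrite geq_min Hs orbT.
Qed.

Lemma part1 (n c k : nat) (e : rel 'I_n) (col : 'I_n -> 'I_c) :
  simple_graph e -> colouring_onto col -> 0 < c -> 0 < k -> k + c < n + 2 ->
  'C(n - k + c - 1, 2) + (n - k) <= num_edges e -> gamma_t e col <= k.
Proof.
move=> Hs Hon c0 k0 Hkc Hm.
have [sym irr] := Hs.
set r := n - k + c - 1.
case: (boolP [exists X : {set 'I_n}, r <= #|bd e [set: 'I_n] X|]) => [/existsP[X HX] | HnX]; last first.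
  exfalso.
  have HT : forall X : {set 'I_n}, X \subset [set: 'I_n] -> #|bd e [set: 'I_n] X| <= r - 1.
    move=> X _; move/existsPn: HnX => /(_ X); rewrite -ltnNge; lia.
  have r1 : 0 < r by move/existsPn: HnX => /(_ set0); rewrite -ltnNge; lia.
  have := viz sym irr HT; rewrite handshake // => H.
  have := bin2C r; move: H Hm r1; rewrite -/r; clear HT HnX.
  have : r = n - k + c - 1 by [].
  move: r ('C(r, 2)) (num_edges e) => [|q] b m // Hr H Hm _.
  rewrite subSS subn0 in H; rewrite /= => Hb.
  have : q * q + q + 2 * (n - k) <= q * q + 2 * q by nia.
  lia.
set P := bd e [set: 'I_n] X.
set D0 := ~: P.
have PX : forall x, x \in X -> x \in D0.
  by move=> x xX; rewrite !inE xX.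
have [v0 v0D] : exists v0, v0 \in D0.
  have n0 : 0 < n by lia.
  pose y := Ordinal n0.
  case: (boolP (y \in D0)) => [yD|]; first by exists y.
  rewrite inE negbK inE => /andP[_ /existsP[x /andP[xX _]]].
  by exists x; apply: PX.
pose rep (i : 'I_c) := odflt v0 [pick v | col v == i].
have repP : forall i, col (rep i) = i.
  move=> i; rewrite /rep; case: pickP => [v /eqP //|H].
  by have [v Hv] := Hon i; move: (H v); rewrite Hv eqxx.
pose Miss := [set i : 'I_c | [forall v in D0, col v != i]].
pose D := D0 :|: rep @: Miss.
have HD : tropical_dominating e col D.
  apply/andP; split.
    apply/forallP => v; case: (boolP (v \in D0)) => vD.
      by rewrite inE vD.
    move: vD; rewrite inE negbK inE => /andP[_ /existsP[x /andP[xX exv]]].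
    by apply/orP; right; apply/existsP; exists x; rewrite inE PX.
  apply/forallP => i; case: (boolP (i \in Miss)) => iM.
    by apply/existsP; exists (rep i); rewrite repP eqxx inE imset_f ?orbT.
  move: iM; rewrite inE negb_forall => /existsP[v]; rewrite negb_imply negbK => /andP[vD /eqP <-].
  by apply/existsP; exists v; rewrite inE vD eqxx.
apply: leq_trans (gamma_le HD) _.
have M1 : #|Miss| <= c - 1.
  have : Miss \subset [set~ col v0].
    apply/subsetP => i; rewrite !inE => /forallP/(_ v0); rewrite v0D /= => H.
    by apply/eqP => Hi; move: H; rewrite Hi eqxx.
  move/subset_leq_card; rewrite cardsC1 card_ord; lia.
have M2 : #|D| <= #|D0| + #|Miss|.
  apply: leq_trans (leq_card_setU _ _) _.
  by rewrite leq_add2l leq_imset_card.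
have M3 : #|D0| = n - #|P| by rewrite cardsCs setCK card_ord.
have M4 : #|P| <= n by have := max_card P; rewrite card_ord.
move: HX; rewrite /r -/P; exact: arith1 c0 k0 Hkc M1 M2 M3 M4.
Qed.

Lemma sum_count n (P : pred nat) : \sum_(0 <= i < n) (P i : nat) = count P (iota 0 n).
Proof.
rewrite -sum1_count [RHS]big_mkcond /= /index_iota subn0.
by apply: eq_bigr => i _; case: (P i).
Qed.

Lemma count_const a m (P : pred nat) (b : bool) :
  (forall i, a <= i < a + m -> P i = b) -> count P (iota a m) = b * m.
Proof.
move=> H; rewrite (@eq_in_count _ _ (fun _ => b)); last first.
  by move=> i; rewrite mem_iota; apply: H.
by clear H; case: b; rewrite ?count_predT ?count_pred0 ?size_iota ?mul1n ?mul0n.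
Qed.

Lemma count3 n a b (P : pred nat) (v1 v2 v3 : bool) : a <= b <= n ->
  (forall i, i < a -> P i = v1) -> (forall i, a <= i < b -> P i = v2) ->
  (forall i, b <= i < n -> P i = v3) ->
  count P (iota 0 n) = v1 * a + v2 * (b - a) + v3 * (n - b).
Proof.
move=> /andP[ab bn] H1 H2 H3.
have -> : n = a + (b - a) + (n - b) by lia.
rewrite !iotaD !count_cat.
rewrite (count_const (b := v1)); last by move=> i; rewrite add0n => /andP[_]; apply: H1.
rewrite (count_const (b := v2)); last by move=> i Hi; apply: H2; lia.
rewrite (count_const (b := v3)); last by move=> i Hi; apply: H3; lia.
congr (_ + _ + _); congr (_ * _); lia.
Qed.

Lemma card_ordP n (P : pred nat) : #|[set i : 'I_n | P i]| = count P (iota 0 n).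
Proof.
have -> : [set i : 'I_n | P i] = [set i in [set: 'I_n] | P i] by apply/setP => i; rewrite !inE.
rewrite -sum_card sumT -(big_mkord xpredT (fun i => (P i : nat))).
by rewrite big_mkcond /= -sum_count.
Qed.

Lemma card_pairs n (Q : nat -> nat -> bool) :
  #|[set p : 'I_n * 'I_n | Q p.1 p.2]| =
  \sum_(0 <= j < n) \sum_(0 <= i < n) (Q i j : nat).
Proof.
have -> : [set p : 'I_n * 'I_n | Q p.1 p.2] = [set p in [set: 'I_n * 'I_n] | Q p.1 p.2].
  by apply/setP => p; rewrite !inE.
rewrite -sum_card sumT -(pair_bigA _ (fun i j : 'I_n => (Q i j : nat))) /= exchange_big /=.
rewrite big_mkord; apply: eq_bigr => j _; by rewrite big_mkord.
Qed.

Definition eN (r c' : nat) (i j : nat) : bool :=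
  (i != j) && ((maxn i j < r) || ((maxn i j == r) && (c' <= minn i j))).
Definition eG n r c' : rel 'I_n := fun i j => eN r c' i j.
Definition colG n c' : 'I_n -> 'I_c'.+1 := fun i => inord (if i < c' then i.+1 else 0).

Lemma gamma_ge n c (e : rel 'I_n) (col : 'I_n -> 'I_c) k :
  (forall D, tropical_dominating e col D -> k <= #|D|) -> k <= n -> k <= gamma_t e col.
Proof.
move=> H kn; rewrite /gamma_t; elim/big_ind: _ => //.
  by move=> x y; rewrite leq_min => -> ->.
Qed.

Lemma part2 (n c k : nat) :
     0 < c -> 0 < k -> c <= k ->
     k + c < n + 2 ->
     exists (e : rel 'I_n) (col : 'I_n -> 'I_c),
       [/\ simple_graph e, colouring_onto col,
           num_edges e = 'C(n - k + c - 1, 2) + (n - k)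
         & gamma_t e col = k].
Proof.
case: c => [//|c'] _ k0 ck Hkc.
have -> : n - k + c'.+1 - 1 = n - k + c' by lia.
set r := n - k + c'.
have rn : r < n by rewrite /r; lia.
exists (@eG n r c'), (@colG n c'); split.
- split => [i j|i]; rewrite /eG /eN; last by rewrite eqxx.
  by rewrite maxnC minnC eq_sym.
- move=> i; case: (posnP i) => [i0|ip].
    exists (Ordinal rn); apply: val_inj; rewrite /colG /= /r; have -> : (n - k + c' < c') = false by lia.
    by rewrite inordK /= ?i0.
  have jn : i.-1 < n by have := ltn_ord i; rewrite /r in rn; lia.
  exists (Ordinal jn); apply: val_inj; rewrite /colG /=.
  have := ltn_ord i; move=> iH.
  have -> : i.-1 < c' by lia.
  rewrite inordK; lia.
- rewrite /num_edges /eG (@card_pairs n (fun i j => (i < j) && eN r c' i j)) /=.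
  have G : forall j, 0 <= j < n -> \sum_(0 <= i < n) ((i < j) && eN r c' i j : nat) =
     if j < r then j else if j == r then r - c' else 0.
    move=> j /andP[_ jn]; rewrite sum_count.
    case: (ltngtP j r) => Hj.
    - rewrite (@count3 n j j _ true false false); first by lia.
      + lia.
      + by move=> i Hi; rewrite /eN; lia.
      + by move=> i Hi; rewrite /eN; lia.
      + by move=> i Hi; rewrite /eN; lia.
    - rewrite (@count3 n 0 0 _ false false false); first by lia.
      + lia.
      + by move=> i Hi; rewrite /eN; lia.
      + by move=> i Hi; rewrite /eN; lia.
      + by move=> i Hi; rewrite /eN; lia.
    - rewrite (@count3 n c' r _ false true false); first by lia.
      + rewrite /r; lia.
      + by move=> i Hi; rewrite /eN; lia.
      + by move=> i Hi; rewrite /eN; lia.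
      + by move=> i Hi; rewrite /eN; lia.
  rewrite (eq_big_nat _ _ G) (@big_cat_nat _ _ _ r) /=; [|lia|lia].
  rewrite [\sum_(r <= i < n) _]big_ltn // ltnn eqxx.
  rewrite (@eq_big_nat _ _ _ 0 r _ (fun j => j)); last by move=> j Hj; rewrite (_ : j < r = true) //; lia.
  have -> : \sum_(r.+1 <= i < n) (if i < r then i else if i == r then r - c' else 0) = 0.
    rewrite big_nat_cond big1 // => j /andP[Hj _].
    have -> : (j < r) = false by lia.
    by have -> : (j == r) = false by lia.
  rewrite bin2_sum addn0.
  have -> : r - c' = n - k by rewrite /r; lia.
  by [].
- have kn : k <= n by lia.
  apply/eqP; rewrite eqn_leq; apply/andP; split.
    pose Ds := [set i : 'I_n | (i < c') || (r <= i)].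
    have HD : tropical_dominating (@eG n r c') (@colG n c') Ds.
      apply/andP; split.
        apply/forallP => v; case: (boolP (v \in Ds)) => //= vD.
        apply/existsP; exists (Ordinal rn); rewrite inE /= leqnn orbT /=.
        move: vD; rewrite inE /eG /eN /=; lia.
      apply/forallP => i; case: (posnP i) => [i0|ip].
        apply/existsP; exists (Ordinal rn); rewrite inE /= leqnn orbT /=.
        apply/eqP; apply: val_inj; rewrite /colG /= /r; have -> : (n - k + c' < c') = false by lia.
        by rewrite inordK /= ?i0.
      have jn : i.-1 < n by have := ltn_ord i; rewrite /r in rn; lia.
      apply/existsP; exists (Ordinal jn); rewrite inE /=.
      have := ltn_ord i; move=> iH.
      apply/andP; split; first by lia.
      apply/eqP; apply: val_inj; rewrite /colG /=.
      have -> : (i.-1 < c') = true by lia.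
      rewrite inordK; lia.
    apply: leq_trans (gamma_le HD) _.
    rewrite /Ds (@card_ordP n (fun i => (i < c') || (r <= i))) (@count3 n c' r _ true false true); first by rewrite /r; lia.
    + rewrite /r; lia.
    + by move=> i Hi; lia.
    + by move=> i Hi; lia.
    + by move=> i Hi; lia.
  apply: gamma_ge => // D /andP[Hdom Htrop].
  pose Ls := [set i : 'I_n | (i < c') || (r < i)].
  have LD : Ls \subset D.
    apply/subsetP => i; rewrite inE => /orP[ic|ri].
      move/forallP: Htrop => /(_ (inord i.+1)) /existsP[v /andP[vD /eqP Hv]].
      have : (v : nat) = (i : nat).
        move: Hv; rewrite /colG; case: ifP => Hvc /(congr1 (@nat_of_ord _)); rewrite !inordK; lia.
      by move/val_inj => <-.
    move/forallP: Hdom => /(_ i) /orP[//|/existsP[u /andP[_ Heu]]].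
    by exfalso; move: Heu; rewrite /eG /eN; lia.
  have [y yD yL] : exists2 y, y \in D & y \notin Ls.
    move/forallP: Hdom => /(_ (Ordinal rn)) /orP[xD|/existsP[u /andP[uD Heu]]].
      by exists (Ordinal rn) => //; rewrite inE /=; rewrite /r; lia.
    by exists u => //; rewrite inE; move: Heu; rewrite /eG /eN /=; lia.
  have : y |: Ls \subset D by rewrite subUset sub1set yD LD.
  move/subset_leq_card; rewrite cardsU1 yL /Ls (@card_ordP n (fun i => (i < c') || (r < i))) (@count3 n c' r.+1 _ true false true).
  + rewrite /r; lia.
  + rewrite /r; lia.
  + by move=> i Hi; lia.
  + by move=> i Hi; lia.
  + by move=> i Hi; lia.
Qed.
Theorem mainTheorem3 :
  (forall (n c k : nat) (e : rel 'I_n) (col : 'I_n -> 'I_c),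
     simple_graph e -> colouring_onto col ->
     0 < c -> 0 < k ->
     k + c < n + 2 ->
     'C(n - k + c - 1, 2) + (n - k) <= num_edges e ->
     gamma_t e col <= k)
  /\
  (forall (n c k : nat),
     0 < c -> 0 < k -> c <= k ->
     k + c < n + 2 ->
     exists (e : rel 'I_n) (col : 'I_n -> 'I_c),
       [/\ simple_graph e, colouring_onto col,
           num_edges e = 'C(n - k + c - 1, 2) + (n - k)
         & gamma_t e col = k]).
Proof.
split; [exact: part1 | exact: part2].
Qed.
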